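(* Let $\mathbf A\in\mathbb R^{m\times n}$ have full column rank ($\operatorname{rank}\mathbf A=n$), with smallest singular value $\sigma_n(\mathbf A)>0$, and let $\mathbf b\in\mathbb R^m$ be such that $\mathbf A\mathbf x=\mathbf b$ is consistent (so $\mathbf A^\dagger\mathbf b$ is its unique solution). Fix a row partition $\{\mathcal I_1,\dots,\mathcal I_s\}$ of $[m]$ and a column partition $\{\mathcal J_1,\dots,\mathcal J_t\}$ of $[n]$, let $\beta=\max_{(\mathcal I,\mathcal J)\in\mathcal P}\|\mathbf A_{\mathcal I,\mathcal J}\|_2^2/\|\mathbf A_{\mathcal I,\mathcal J}\|_F^2$, and assume $0<\alpha<2/(t\beta)$. Let $\mathbf x^0\in\mathbb R^n$ be arbitrary and let $\mathbf x^k$ be the $k$th iterate of the doubly stochastic block Gauss--Seidel (DSBGS) algorithm described in the context. Then for every $k\ge0$, $$\mathbb E\big[\|\mathbf x^k-\mathbf A^\dagger\mathbf b\|_2^2\big]\le\Big(1-\frac{(2\alpha-t\beta\alpha^2)\sigma_n^2(\mathbf A)}{\|\mathbf A\|_F^2}\Big)^k\|\mathbf x^0-\mathbf A^\dagger\mathbf b\|_2^2 .$$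
   Context: Notation: $\mathbf A^\dagger$ is the Moore--Penrose pseudoinverse, $\|\cdot\|_F$ the Frobenius norm, $\|\cdot\|_2$ the Euclidean norm for vectors and spectral norm (largest singular value) for matrices. For $\mathcal I\subseteq[m]=\{1,\dots,m\}$ and $\mathcal J\subseteq[n]$, $\mathbf A_{\mathcal I,\mathcal J}$ is the submatrix of $\mathbf A$ with rows indexed by $\mathcal I$ and columns indexed by $\mathcal J$; $\mathbf I_{:,\mathcal J}$ denotes the columns of the identity matrix (of the appropriate order) indexed by $\mathcal J$. DSBGS algorithm: the sets $\mathcal I_1,\dots,\mathcal I_s$ are nonempty, pairwise disjoint with union $[m]$, and $\mathcal J_1,\dots,\mathcal J_t$ are nonempty, pairwise disjoint with union $[n]$; $\mathcal P=\{\mathcal I_1,\dots,\mathcal I_s\}\times\{\mathcal J_1,\dots,\mathcal J_t\}$ (in the definition of $\beta$ the maximum is over blocks with $\mathbf A_{\mathcal I,\mathcal J}\neq 0$). Given $\alpha>0$ and $\mathbf x^0$, for $k=1,2,\dots$: pick $(\mathcal I,\mathcal J)\in\mathcal P$ (independently of previous choices) with probability $\|\mathbf A_{\mathcal I,\mathcal J}\|_F^2/\|\mathbf A\|_F^2$, and set $$\mathbf x^k=\mathbf x^{k-1}-\alpha\,\frac{\mathbf I_{:,\mathcal J}(\mathbf A_{\mathcal I,\mathcal J})^{T}(\mathbf I_{:,\mathcal I})^{T}}{\|\mathbf A_{\mathcal I,\mathcal J}\|_F^2}\,(\mathbf A\mathbf x^{k-1}-\mathbf b).$$ The expectation $\mathbb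 E$ is over the random choices of the blocks. *)

(* Defs.v *)
From HB Require Import structures.
From mathcomp Require Import all_boot all_order all_algebra.
From mathcomp Require Import classical_sets reals.
Set Implicit Arguments. Unset Strict Implicit. Unset Printing Implicit Defensive.
Import Order.TTheory GRing.Theory Num.Theory.
Local Open Scope ring_scope.
Local Open Scope classical_set_scope.

Section DSBGS.
Variable R : realType.

Definition vnorm (k : nat) (x : 'cV[R]_k) : R :=
  Num.sqrt (\sum_(i < k) x i 0 ^+ 2).

Definition frob (p q : nat) (M : 'M[R]_(p, q)) : R :=
  Num.sqrt (\sum_(i < p) \sum_(j < q) M i j ^+ 2).

Definition sigma_max (p q : nat) (M : 'M[R]_(p, q)) : R :=
  Num.sqrt (sup [set a : R | eigenvalue (M^T *m M) a]).

Definition sigma_min (p q : nat) (M : 'M[R]_(p, q)) : R :=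
  Num.sqrt (inf [set a : R | eigenvalue (M^T *m M) a]).

Definition is_pinv (p q : nat) (A : 'M[R]_(p, q)) (X : 'M[R]_(q, p)) : Prop :=
  [/\ A *m X *m A = A, X *m A *m X = X,
      (A *m X)^T = A *m X & (X *m A)^T = X *m A].

(* Submatrix A_{I,J}, rows/columns listed in increasing order. *)
Definition submx (m n : nat) (A : 'M[R]_(m, n)) (I : {set 'I_m}) (J : {set 'I_n})
  : 'M[R]_(#|I|, #|J|) :=
  \matrix_(i < #|I|, j < #|J|) A (enum_val i) (enum_val j).

Definition idcols (n : nat) (J : {set 'I_n}) : 'M[R]_(n, #|J|) :=
  \matrix_(i < n, k < #|J|) (i == enum_val k)%:R.

Definition block m n := ({set 'I_m} * {set 'I_n})%type.

Definition in_blocks m n (Pr : {set {set 'I_m}}) (Pc : {set {set 'I_n}})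
  (p : block m n) : bool := (p.1 \in Pr) && (p.2 \in Pc).

Definition beta m n (A : 'M[R]_(m, n)) (Pr : {set {set 'I_m}})
  (Pc : {set {set 'I_n}}) : R :=
  \big[Num.max/0]_(p : block m n | in_blocks Pr Pc p && (submx A p.1 p.2 != 0))
     (sigma_max (submx A p.1 p.2) ^+ 2 / frob (submx A p.1 p.2) ^+ 2).

Definition block_prob m n (A : 'M[R]_(m, n)) (p : block m n) : R :=
  frob (submx A p.1 p.2) ^+ 2 / frob A ^+ 2.

Definition dsbgs_step m n (A : 'M[R]_(m, n)) (b : 'cV[R]_m) (alpha : R)
  (x : 'cV[R]_n) (p : block m n) : 'cV[R]_n :=
  x - (alpha / frob (submx A p.1 p.2) ^+ 2) *:
      (idcols p.2 *m (submx A p.1 p.2)^T *m (idcols p.1)^T *m (A *m x - b)).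

Definition dsbgs_iter m n (A : 'M[R]_(m, n)) (b : 'cV[R]_m) (alpha : R)
  (x0 : 'cV[R]_n) (w : seq (block m n)) : 'cV[R]_n :=
  foldl (dsbgs_step A b alpha) x0 w.

Definition expected_sq_err m n (A : 'M[R]_(m, n)) (b : 'cV[R]_m) (alpha : R)
  (Pr : {set {set 'I_m}}) (Pc : {set {set 'I_n}}) (x0 xs : 'cV[R]_n) (k : nat) : R :=
  \sum_(w : k.-tuple (block m n) | all (in_blocks Pr Pc) w)
     (\prod_(p <- w) block_prob A p) * vnorm (dsbgs_iter A b alpha x0 w - xs) ^+ 2.

End DSBGS.

(* Main.v *)
Require Import Defs.
From HB Require Import structures.
From mathcomp Require Import all_boot all_order all_algebra.
From mathcomp Require Import classical_sets reals.
From mathcomp Require Import ring lra.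
Set Implicit Arguments. Unset Strict Implicit. Unset Printing Implicit Defensive.
Import Order.TTheory GRing.Theory Num.Theory.
Local Open Scope ring_scope.


Section Lin.
Variable R : realType.

Definition dot n (x y : 'cV[R]_n) : R := \sum_i x i 0 * y i 0.

Lemma dotC n (x y : 'cV[R]_n) : dot x y = dot y x.
Proof. by apply: eq_bigr => i _; rewrite mulrC. Qed.

Lemma dotDl n (x y z : 'cV[R]_n) : dot (x + y) z = dot x z + dot y z.
Proof. by rewrite /dot -big_split; apply: eq_bigr => i _; rewrite !mxE mulrDl. Qed.

Lemma dotZl n a (x z : 'cV[R]_n) : dot (a *: x) z = a * dot x z.
Proof. by rewrite /dot mulr_sumr; apply: eq_bigr => i _; rewrite !mxE mulrA. Qed.

Lemma dotNl n (x z : 'cV[R]_n) : dot (- x) z = - dot x z.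
Proof. by rewrite -scaleN1r dotZl mulN1r. Qed.

Lemma dotBl n (x y z : 'cV[R]_n) : dot (x - y) z = dot x z - dot y z.
Proof. by rewrite dotDl dotNl. Qed.

Lemma dotDr n (x y z : 'cV[R]_n) : dot z (x + y) = dot z x + dot z y.
Proof. by rewrite dotC dotDl !(dotC z). Qed.

Lemma dotZr n a (x z : 'cV[R]_n) : dot z (a *: x) = a * dot z x.
Proof. by rewrite dotC dotZl dotC. Qed.

Lemma dotBr n (x y z : 'cV[R]_n) : dot z (x - y) = dot z x - dot z y.
Proof. by rewrite dotC dotBl !(dotC z). Qed.

Lemma dot0l n (z : 'cV[R]_n) : dot 0 z = 0.
Proof. by rewrite /dot big1 // => i _; rewrite mxE mul0r. Qed.

Lemma dot0r n (z : 'cV[R]_n) : dot z 0 = 0.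
Proof. by rewrite dotC dot0l. Qed.

Lemma dot_mulmx p q (B : 'M[R]_(p, q)) (x : 'cV[R]_p) (y : 'cV[R]_q) :
  dot x (B *m y) = dot (B^T *m x) y.
Proof.
rewrite /dot.
under eq_bigr do rewrite mxE mulr_sumr.
under [RHS]eq_bigr do rewrite mxE mulr_suml.
rewrite exchange_big /=; apply: eq_bigr => j _; apply: eq_bigr => i _.
by rewrite mxE; ring.
Qed.

Lemma dot_ge0 n (x : 'cV[R]_n) : 0 <= dot x x.
Proof. by apply: sumr_ge0 => i _; rewrite -expr2 sqr_ge0. Qed.

Lemma dot_eq0 n (x : 'cV[R]_n) : (dot x x == 0) = (x == 0).
Proof.
apply/idP/idP; last by move/eqP->; rewrite dot0l.
rewrite /dot psumr_eq0 => [H|i _]; last by rewrite -expr2 sqr_ge0.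
apply/eqP/matrixP => i j; rewrite ord1 mxE.
by have /implyP/(_ isT) := allP H i (mem_index_enum _); rewrite -expr2 sqrf_eq0 => /eqP.
Qed.

Lemma vnorm_sq n (x : 'cV[R]_n) : vnorm x ^+ 2 = dot x x.
Proof.
rewrite /vnorm sqr_sqrtr; last by apply: sumr_ge0 => i _; rewrite sqr_ge0.
by apply: eq_bigr => i _; rewrite expr2.
Qed.

Lemma discr (a b c : R) : 0 <= a -> (forall t, 0 <= a * t ^+ 2 + 2 * b * t + c) ->
  b ^+ 2 <= a * c.
Proof.
move=> a0 H; have [->|bn0] := eqVneq b 0; first by rewrite expr0n /= mulr_ge0 //;
  have := H 0; rewrite !(mul0r, mulr0, expr0n, add0r) /=.
have [a00|ap] := eqVneq a 0.
  have := H (- (c + 1) / (2 * b)); rewrite a00 mul0r add0r.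
  have -> : 2 * b * (- (c + 1) / (2 * b)) = - (c + 1).
    by field.
  move=> h; lra.
have apos : 0 < a by rewrite lt_def ap a0.
have := H (- b / a).
have -> : a * (- b / a) ^+ 2 + 2 * b * (- b / a) + c = c - b ^+ 2 / a.
  by field.
rewrite subr_ge0 ler_pdivrMr // => h; rewrite mulrC; exact: h.
Qed.

End Lin.


Section Spec.
Variable R : realType.

Lemma cs_form n (P : 'M[R]_n) : P^T = P -> (forall z, 0 <= dot z (P *m z)) ->
  forall x y, dot x (P *m y) ^+ 2 <= dot x (P *m x) * dot y (P *m y).
Proof.
move=> sP psd x y; rewrite mulrC; apply: discr => // t.
have := psd (x + t *: y).
rewrite mulmxDr -scalemxAr !(dotDl, dotDr, dotZl, dotZr).
have -> : dot y (P *m x) = dot x (P *m y) by rewrite dot_mulmx sP dotC.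
move=> h; apply: (le_trans h); rewrite le_eqVlt; apply/orP; left; apply/eqP; ring.
Qed.

Lemma cs n (x y : 'cV[R]_n) : dot x y ^+ 2 <= dot x x * dot y y.
Proof.
have := @cs_form n 1%:M (trmx1 _ _) _ x y; rewrite !mul1mx; apply.
by move=> z; rewrite mul1mx dot_ge0.
Qed.

Definition fs p q (B : 'M[R]_(p, q)) : R := \sum_i dot (row i B)^T (row i B)^T.

Lemma fs_ge0 p q (B : 'M[R]_(p, q)) : 0 <= fs B.
Proof. by apply: sumr_ge0 => i _; apply: dot_ge0. Qed.

Lemma fs_bound p q (B : 'M[R]_(p, q)) (x : 'cV[R]_q) :
  dot (B *m x) (B *m x) <= fs B * dot x x.
Proof.
rewrite /fs mulr_suml /dot; apply: ler_sum => i _.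
have -> : (B *m x) i 0 = dot (row i B)^T x.
  by rewrite mxE; apply: eq_bigr => j _; rewrite !mxE.
rewrite -expr2; exact: cs.
Qed.

Lemma qf_bound n (S : 'M[R]_n) (x : 'cV[R]_n) :
  dot x (S *m x) <= (1 + fs S) / 2 * dot x x.
Proof.
have h1 := dot_ge0 (x - S *m x).
rewrite !(dotBl, dotBr) (dotC (S *m x) x) in h1.
have h2 := fs_bound S x.
have -> : (1 + fs S) / 2 * dot x x = (dot x x + fs S * dot x x) / 2 by field.
lra.
Qed.

Lemma rayleigh_max n (S : 'M[R]_n.+1) : S^T = S ->
  exists d, ~~ (S - d%:M \in unitmx) /\ forall x, dot x (S *m x) <= d * dot x x.
Proof.
move=> sS.
pose Q : set R := fun r => exists2 x : 'cV[R]_n.+1, x != 0 & r = dot x (S *m x) / dot x x.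
have hQ : has_sup Q.
  split.
    pose one : 'cV[R]_n.+1 := const_mx 1.
    exists (dot one (S *m one) / dot one one).
    exists one => //; apply/eqP => /matrixP /(_ ord0 ord0).
    by rewrite !mxE => /eqP; rewrite oner_eq0.
  exists ((1 + fs S) / 2) => r [x xn0 ->].
  rewrite ler_pdivrMr ?qf_bound //.
  by rewrite lt_def dot_eq0 xn0 dot_ge0.
set d := sup Q.
have H1 : forall x, dot x (S *m x) <= d * dot x x.
  move=> x; have [->|xn0] := eqVneq x 0; first by rewrite dot0l dot0r mulr0.
  have xp : 0 < dot x x by rewrite lt_def dot_eq0 xn0 dot_ge0.
  rewrite -ler_pdivrMr //; apply: sup_upper_bound => //; by exists x.
exists d; split => //; apply/negP => Pu.
pose N : 'M[R]_n.+1 := d%:M - S.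
have sN : N^T = N by rewrite /N linearB /= tr_scalar_mx sS.
have NE : forall z : 'cV[R]_n.+1, N *m z = d *: z - S *m z.
  by move=> z; rewrite /N mulmxBl mul_scalar_mx.
have psd : forall z : 'cV[R]_n.+1, 0 <= dot z (N *m z).
  by move=> z; rewrite NE dotBr dotZr subr_ge0 H1.
pose Vi := - invmx (S - d%:M).
have Vx : forall x : 'cV[R]_n.+1, x = Vi *m (N *m x).
  by move=> x; rewrite /Vi /N -(opprB S) !mulNmx mulmxN opprK mulKmx.
pose K' := (1 + fs N) / 2.
have K'0 : 0 <= K' by rewrite /K' divr_ge0 // addr_ge0 // fs_ge0.
have key : forall x : 'cV[R]_n.+1, dot x x <= fs Vi * K' * dot x (N *m x).
  move=> x; set y := N *m x.
  have h1 : dot x (N *m y) = dot y y by rewrite dot_mulmx sN.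
  have h2 := cs_form sN psd x y; rewrite h1 in h2.
  have h3 := qf_bound N y.
  have h4 : dot y y <= K' * dot x (N *m x).
    have [y0|yp] := eqVneq (dot y y) 0.
      by rewrite y0 mulr_ge0 // psd.
    have ypos : 0 < dot y y by rewrite lt_def yp dot_ge0.
    have h5 : dot y y ^+ 2 <= dot x (N *m x) * (K' * dot y y).
      apply: (le_trans h2); apply: ler_wpM2l; first exact: psd.
      exact: h3.
    rewrite expr2 mulrCA mulrA in h5.
    by rewrite -(ler_pM2r ypos) mulrC.
  rewrite {1 2}(Vx x); apply: (le_trans (fs_bound _ _)).
  by rewrite -mulrA ler_wpM2l // fs_ge0.
set L := fs Vi * K'.
have L0 : 0 <= L by rewrite mulr_ge0 // fs_ge0.
have eps0 : 0 < 1 / (L + 1) by apply: divr_gt0; lra.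
have [r [x xn0 ->] hr] := sup_adherent eps0 hQ.
have xp : 0 < dot x x by rewrite lt_def dot_eq0 xn0 dot_ge0.
have := key x; rewrite NE dotBr dotZr.
rewrite ltr_pdivlMr // in hr.
move: hr; set e := 1 / (L + 1); set q := dot x (S *m x); set nx := dot x x => hr hk.
have hLe : L * e < 1 by rewrite /e mulrA mulr1 ltr_pdivrMr; lra.
have : nx <= L * (e * nx).
  apply: (le_trans hk); rewrite ler_wpM2l //.
  move: hr; rewrite -/d mulrBl; lra.
move=> h; have : L * (e * nx) < nx by rewrite mulrA -[X in _ < X]mul1r ltr_pM2r.
move: h; lra.
Qed.

End Spec.


Section Sig.
Variable R : realType.

Lemma eig_nonunit n (S : 'M[R]_n) d : ~~ (S - d%:M \in unitmx) -> eigenvalue S d.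
Proof. by rewrite /eigenvalue /eigenspace kermx_eq0 row_free_unit. Qed.

Lemma unitmxN' n (X : 'M[R]_n) : (- X \in unitmx) -> X \in unitmx.
Proof.
move=> h; have := mulmxV h; rewrite mulNmx -mulmxN => /mulmx1_unit [] //.
Qed.

Lemma eig_vec n (S : 'M[R]_n) a : S^T = S -> eigenvalue S a ->
  exists2 x : 'cV[R]_n, x != 0 & dot x (S *m x) = a * dot x x.
Proof.
move=> sS /eigenvalueP [v vS vn0]; exists v^T.
  by apply: contra vn0 => /eqP h; rewrite -[v]trmxK h linear0.
have -> : S *m v^T = a *: v^T by rewrite -sS -trmx_mul vS linearZ.
by rewrite dotZr.
Qed.

Lemma le_sqrt_sq (x : R) : x <= Num.sqrt x ^+ 2.
Proof.
have [x0|x0] := leP 0 x; first by rewrite sqr_sqrtr.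
by rewrite ltr0_sqrtr // expr0n /= ltW.
Qed.

Lemma sigma_max_bound p q (M : 'M[R]_(p, q)) (r : 'cV[R]_p) :
  dot (M^T *m r) (M^T *m r) <= sigma_max M ^+ 2 * dot r r.
Proof.
case: q M => [|q] M.
  by rewrite /dot big_ord0 mulr_ge0 ?sqr_ge0 ?dot_ge0.
set S := M^T *m M.
have sS : S^T = S by rewrite /S trmx_mul trmxK.
have [d [dn Hd]] := rayleigh_max sS.
pose E : set R := fun a => eigenvalue S a.
change (sigma_max M) with (Num.sqrt (sup E)).
have dE : E d by exact: eig_nonunit.
have ubE : forall a, E a -> a <= d.
  move=> a /(eig_vec sS) [x xn0 hx].
  have xp : 0 < dot x x by rewrite lt_def dot_eq0 xn0 dot_ge0.
  by rewrite -(ler_pM2r xp) -hx.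
have d0 : 0 <= d.
  have [x xn0 hx] := eig_vec sS dE.
  have xp : 0 < dot x x by rewrite lt_def dot_eq0 xn0 dot_ge0.
  rewrite -(pmulr_lge0 _ xp) -hx /S -mulmxA dot_mulmx trmxK; exact: dot_ge0.
have dsup : d <= sup E.
  by apply: ub_le_sup => //; exists d => a; apply: ubE.
set u := M^T *m r.
have h1 : dot u u = dot r (M *m u) by rewrite dot_mulmx.
have h2 : dot (M *m u) (M *m u) = dot u (S *m u).
  by rewrite /S -mulmxA dot_mulmx dotC.
have h3 := cs r (M *m u); rewrite -h1 h2 in h3.
have h4 := Hd u.
suff : dot u u <= d * dot r r.
  move=> h; apply: (le_trans h); apply: ler_wpM2r; first exact: dot_ge0.
  exact: le_trans dsup (le_sqrt_sq _).
have [u0|un0] := eqVneq (dot u u) 0.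
  by rewrite u0 mulr_ge0 // dot_ge0.
have up : 0 < dot u u by rewrite lt_def un0 dot_ge0.
have : dot u u ^+ 2 <= dot r r * (d * dot u u).
  apply: (le_trans h3); apply: ler_wpM2l; [exact: dot_ge0| exact: h4].
move=> h; rewrite -(ler_pM2r up) -expr2; apply: (le_trans h); rewrite le_eqVlt; apply/orP; left; apply/eqP; ring.
Qed.
End Sig.

Section Sig2.
Variable R : realType.
Lemma sigma_min_bound p q (A : 'M[R]_(p, q)) (e : 'cV[R]_q) :
  0 < sigma_min A -> sigma_min A ^+ 2 * dot e e <= dot (A *m e) (A *m e).
Proof.
case: q A e => [|q] A e sp.
  by rewrite {1}/dot big_ord0 mulr0 dot_ge0.
set S := A^T *m A.
have sS : S^T = S by rewrite /S trmx_mul trmxK.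
have sN : (- S)^T = - S by rewrite linearN /= sS.
have [d [dn Hd]] := rayleigh_max sN.
pose E : set R := fun a => eigenvalue S a.
move: sp; change (sigma_min A) with (Num.sqrt (inf E)) => sp.
have dE : E (- d).
  apply: eig_nonunit; apply: contra dn => h; apply: unitmxN'.
  have -> : - (- S - d%:M) = S - (- d)%:M.
    by rewrite (raddfN (@scalar_mx _ _)) opprB !opprK addrC.
  exact: h.
have lbE : forall a, E a -> - d <= a.
  move=> a /(eig_vec sS) [x xn0 hx].
  have xp : 0 < dot x x by rewrite lt_def dot_eq0 xn0 dot_ge0.
  rewrite -(ler_pM2r xp) -hx mulNr lerNl.
  by have := Hd x; rewrite mulNmx dotC dotNl dotC.
have infd : inf E <= - d.
  by apply: ge_inf => //; exists (- d) => a; apply: lbE.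
have ip : 0 < inf E by rewrite -sqrtr_gt0.
rewrite sqr_sqrtr; last exact: ltW ip.
have -> : dot (A *m e) (A *m e) = dot e (S *m e) by rewrite /S -mulmxA dot_mulmx dotC.
apply: (le_trans (ler_wpM2r (dot_ge0 e) infd)).
by have := Hd e; rewrite mulNmx dotC dotNl dotC mulNr lerNl.
Qed.
End Sig2.


Section Blocks.
Variable R : realType.

Lemma sum_delta k (a : 'I_k) (f : 'I_k -> R) : \sum_i (i == a)%:R * f i = f a.
Proof.
rewrite (bigD1 a) //= eqxx mul1r big1 ?addr0 // => i /negbTE ->.
by rewrite mul0r.
Qed.

Lemma idcolsT_mul k (J : {set 'I_k}) (r : 'cV[R]_k) :
  (idcols R J)^T *m r = \col_l r (enum_val l) 0.
Proof.
apply/matrixP => l z; rewrite ord1 !mxE.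
under eq_bigr do rewrite !mxE.
exact: sum_delta.
Qed.

Lemma idcols_iso k (J : {set 'I_k}) (v : 'cV[R]_#|J|) :
  dot (idcols R J *m v) (idcols R J *m v) = dot v v.
Proof.
rewrite dot_mulmx idcolsT_mul; apply: eq_bigr => l _; congr (_ * _).
rewrite !mxE.
under eq_bigr do rewrite !mxE (inj_eq enum_val_inj) eq_sym.
exact: sum_delta.
Qed.

Lemma dot_CI k (I : {set 'I_k}) (r : 'cV[R]_k) :
  dot ((idcols R I)^T *m r) ((idcols R I)^T *m r) = \sum_(i in I) r i 0 ^+ 2.
Proof.
rewrite idcolsT_mul (big_enum_val (fun i => r i 0 ^+ 2)).
by apply: eq_bigr => l _; rewrite !mxE expr2.
Qed.

Lemma T_CI m n (A : 'M[R]_(m, n)) I J (r : 'cV[R]_m) (e : 'cV[R]_n) :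
  dot ((idcols R I)^T *m r) (Defs.submx A I J *m ((idcols R J)^T *m e)) =
  \sum_(i in I) \sum_(j in J) r i 0 * A i j * e j 0.
Proof.
rewrite !idcolsT_mul /dot (big_enum_val (fun i => \sum_(j in J) r i 0 * A i j * e j 0)).
apply: eq_bigr => k _; rewrite !mxE (big_enum_val (fun j => r _ 0 * A _ j * e j 0)) mulr_sumr.
by apply: eq_bigr => l _; rewrite !mxE mulrA.
Qed.

Lemma frob_sq p q (M : 'M[R]_(p, q)) : frob M ^+ 2 = \sum_i \sum_j M i j ^+ 2.
Proof.
rewrite /frob sqr_sqrtr //; apply: sumr_ge0 => i _; apply: sumr_ge0 => j _.
exact: sqr_ge0.
Qed.

Lemma frob_sub m n (A : 'M[R]_(m, n)) I J :
  frob (Defs.submx A I J) ^+ 2 = \sum_(i in I) \sum_(j in J) A i j ^+ 2.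
Proof.
rewrite frob_sq (big_enum_val (fun i => \sum_(j in J) A i j ^+ 2)).
apply: eq_bigr => k _; rewrite (big_enum_val (fun j => A _ j ^+ 2)).
by apply: eq_bigr => l _; rewrite !mxE.
Qed.

Lemma frob_eq0 p q (M : 'M[R]_(p, q)) : (frob M ^+ 2 == 0) = (M == 0).
Proof.
rewrite frob_sq; apply/idP/idP; last first.
  by move/eqP->; rewrite big1 // => i _; rewrite big1 // => j _; rewrite mxE expr0n.
rewrite psumr_eq0 => [/allP H|i _]; last by apply: sumr_ge0 => j _; rewrite sqr_ge0.
apply/eqP/matrixP => i j; rewrite mxE.
have /implyP/(_ isT) := H i (mem_index_enum _).
rewrite psumr_eq0 => [/allP H2|j' _]; last by rewrite sqr_ge0.
have /implyP/(_ isT) := H2 j (mem_index_enum _).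
by rewrite sqrf_eq0 => /eqP.
Qed.

Lemma part_sum k (P : {set {set 'I_k}}) (F : 'I_k -> R) :
  finset.partition P [set: 'I_k] -> \sum_(B in P) \sum_(i in B) F i = \sum_i F i.
Proof.
case/and3P => /eqP cov tr _.
rewrite -big_trivIset // cov; apply: eq_bigl => i; by rewrite finset.in_setT.
Qed.

End Blocks.


Section Main.
Variable R : realType.
Variables (m n : nat) (A : 'M[R]_(m, n)) (b : 'cV[R]_m).
Variables (Pr : {set {set 'I_m}}) (Pc : {set {set 'I_n}}) (alpha : R) (xs : 'cV[R]_n).
Hypothesis Axs : A *m xs = b.
Hypothesis hPr : finset.partition Pr [set: 'I_m].
Hypothesis hPc : finset.partition Pc [set: 'I_n].
Hypothesis F2p : 0 < frob A ^+ 2.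
Hypothesis a0 : 0 < alpha.

Lemma beta_ge0 : 0 <= beta A Pr Pc.
Proof.
rewrite /beta; elim/big_ind: _ => // [x y hx hy|p _].
  by rewrite le_max hx.
by rewrite divr_ge0 // sqr_ge0.
Qed.

Lemma beta_ub I J : I \in Pr -> J \in Pc -> Defs.submx A I J != 0 ->
  sigma_max (Defs.submx A I J) ^+ 2 / frob (Defs.submx A I J) ^+ 2 <= beta A Pr Pc.
Proof.
move=> HI HJ Hn; rewrite /beta (bigD1 (I, J)) /=; first by rewrite le_max lexx.
by rewrite /in_blocks /= HI HJ.
Qed.

Lemma step_err x I J :
  let M := Defs.submx A I J in let e := x - xs in
  let c := alpha / frob M ^+ 2 in
  let rI := (idcols R I)^T *m (A *m e) in
  dot (dsbgs_step A b alpha x (I, J) - xs) (dsbgs_step A b alpha x (I, J) - xs) =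
  dot e e - 2 * c * dot rI (M *m ((idcols R J)^T *m e)) +
  c ^+ 2 * dot (M^T *m rI) (M^T *m rI).
Proof.
move=> M e c rI.
have -> : dsbgs_step A b alpha x (I, J) - xs = e - c *: (idcols R J *m (M^T *m rI)).
  rewrite /dsbgs_step /= -Axs -mulmxBr -/M -/c -/e /rI !mulmxA.
  by rewrite addrAC.
have E1 : forall (e' u : 'cV[R]_n) c', dot (e' - c' *: u) (e' - c' *: u) =
    dot e' e' - 2 * c' * dot e' u + c' ^+ 2 * dot u u.
  by move=> e' u c'; rewrite !(dotBl, dotBr, dotZl, dotZr) (dotC u e'); ring.
rewrite E1 idcols_iso.
have -> : dot e (idcols R J *m (M^T *m rI)) = dot rI (M *m ((idcols R J)^T *m e)).
  by rewrite dot_mulmx dot_mulmx trmxK dotC.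
by [].
Qed.

Lemma block_bound x I J : I \in Pr -> J \in Pc ->
  block_prob A (I, J) *
    dot (dsbgs_step A b alpha x (I, J) - xs) (dsbgs_step A b alpha x (I, J) - xs)
  <= frob (Defs.submx A I J) ^+ 2 / frob A ^+ 2 * dot (x - xs) (x - xs)
     - 2 * alpha / frob A ^+ 2 * (\sum_(i in I) \sum_(j in J)
          (A *m (x - xs)) i 0 * A i j * (x - xs) j 0)
     + alpha ^+ 2 * beta A Pr Pc / frob A ^+ 2 * (\sum_(i in I) (A *m (x - xs)) i 0 ^+ 2).
Proof.
move=> HI HJ.
rewrite -T_CI -dot_CI step_err /block_prob /=.
set e := x - xs.
set M := Defs.submx A I J.
set rI := (idcols R I)^T *m (A *m e).
set T := dot rI _.
set V := dot (M^T *m rI) _.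
set RI := dot rI rI.
set F2 := frob A ^+ 2.
have RI0 : 0 <= RI by exact: dot_ge0.
have b0 := beta_ge0.
have [M0|Mn0] := eqVneq M 0.
  have f0 : frob M ^+ 2 = 0 by apply/eqP; rewrite frob_eq0 M0.
  have T0 : T = 0 by rewrite /T M0 mul0mx dot0r.
  rewrite f0 T0 !mul0r mulr0 subr0 add0r.
  apply: mulr_ge0 => //; apply: divr_ge0; [apply: mulr_ge0 => //; exact: sqr_ge0 | exact: ltW].
have fp : 0 < frob M ^+ 2.
  by rewrite lt_def frob_eq0 Mn0 sqr_ge0.
set f2 := frob M ^+ 2.
have Vb : V <= beta A Pr Pc * f2 * RI.
  apply: (le_trans (sigma_max_bound M rI)); apply: ler_wpM2r => //.
  by rewrite -ler_pdivrMr //; apply: beta_ub.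
have -> : f2 / F2 * (dot e e - 2 * (alpha / f2) * T + (alpha / f2) ^+ 2 * V) =
   f2 / F2 * dot e e - 2 * alpha / F2 * T + alpha ^+ 2 / (f2 * F2) * V.
  by field; rewrite !gt_eqF.
rewrite lerD2l.
have -> : alpha ^+ 2 * beta A Pr Pc / F2 * RI =
          alpha ^+ 2 / (f2 * F2) * (beta A Pr Pc * f2 * RI).
  by field; rewrite !gt_eqF.
apply: ler_wpM2l => //.
by rewrite divr_ge0 ?sqr_ge0 // mulr_ge0 // ltW.
Qed.

Lemma dpart (g : 'I_m -> 'I_n -> R) :
  \sum_(I in Pr) \sum_(J in Pc) \sum_(i in I) \sum_(j in J) g i j = \sum_i \sum_j g i j.
Proof.
under eq_bigr do rewrite exchange_big /=.
rewrite (part_sum _ hPr); apply: eq_bigr => i _.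
exact: part_sum.
Qed.

Lemma one_step x :
  \sum_(p : block m n | in_blocks Pr Pc p) block_prob A p *
     dot (dsbgs_step A b alpha x p - xs) (dsbgs_step A b alpha x p - xs)
  <= dot (x - xs) (x - xs) - (2 * alpha - #|Pc|%:R * beta A Pr Pc * alpha ^+ 2)
        / frob A ^+ 2 * dot (A *m (x - xs)) (A *m (x - xs)).
Proof.
pose G := fun p : block m n => block_prob A p *
     dot (dsbgs_step A b alpha x p - xs) (dsbgs_step A b alpha x p - xs).
have -> : \sum_(p : block m n | in_blocks Pr Pc p) G p =
          \sum_(I in Pr) \sum_(J in Pc) G (I, J).
  by rewrite pair_big_dep /=; apply: eq_big => [[I J]|[I J] _].
set e := x - xs; set r := A *m e.
apply: le_trans.
  apply: ler_sum => I HI; apply: ler_sum => J HJ; exact: block_bound.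
rewrite -/e -/r.
under eq_bigr do rewrite big_split /= big_split /=.
rewrite big_split /= big_split /=.
set F2 := frob A ^+ 2.
have sum2_mull : forall (c : R) (f : {set 'I_m} -> {set 'I_n} -> R),
    \sum_(I in Pr) \sum_(J in Pc) (f I J * c) = (\sum_(I in Pr) \sum_(J in Pc) f I J) * c.
  by move=> c f; rewrite mulr_suml; apply: eq_bigr => I _; rewrite mulr_suml.
have sf : \sum_(I in Pr) \sum_(J in Pc) frob (Defs.submx A I J) ^+ 2 = F2.
  under eq_bigr do under eq_bigr do rewrite frob_sub.
  by rewrite dpart /F2 frob_sq.
have hT : \sum_i \sum_j r i 0 * A i j * e j 0 = dot r r.
  rewrite /dot; apply: eq_bigr => i _; rewrite {2}/r mxE mulr_sumr.
  by apply: eq_bigr => j _; rewrite mulrA.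
have S1 : \sum_(I in Pr) \sum_(J in Pc) (frob (Defs.submx A I J) ^+ 2 / F2 * dot e e)
    = dot e e.
  under eq_bigr do under eq_bigr do rewrite -mulrA.
  by rewrite sum2_mull sf mulrA divff ?mul1r // gt_eqF.
have S2 : \sum_(I in Pr) \sum_(J in Pc)
     - (2 * alpha / F2 * \sum_(i in I) \sum_(j in J) r i 0 * A i j * e j 0)
    = - (2 * alpha / F2 * dot r r).
  under eq_bigr do rewrite sumrN.
  rewrite sumrN; congr (- _).
  under eq_bigr do under eq_bigr do rewrite mulrC.
  by rewrite sum2_mull dpart hT mulrC.
have S3 : \sum_(I in Pr) \sum_(J in Pc)
     (alpha ^+ 2 * beta A Pr Pc / F2 * \sum_(i in I) r i 0 ^+ 2)
    = #|Pc|%:R * (alpha ^+ 2 * beta A Pr Pc / F2 * dot r r).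
  under eq_bigr do rewrite sumr_const.
  rewrite sumrMnl -mulr_sumr (part_sum _ hPr) -mulr_natl.
  rewrite mulr1 mulr_natl; congr (_ * _ *+ _); rewrite /dot; apply: eq_bigr => i _; rewrite expr2.
have -> : forall a b c d, a + b + c <= d = (a + b + c <= d) by [].
apply: (@le_trans _ _ (dot e e + - (2 * alpha / F2 * dot r r) +
   #|Pc|%:R * (alpha ^+ 2 * beta A Pr Pc / F2 * dot r r))).
  by rewrite le_eqVlt; apply/orP; left; apply/eqP; congr (_ + _ + _).
rewrite le_eqVlt; apply/orP; left; apply/eqP.
by field; rewrite gt_eqF.
Qed.

End Main.


Section Exp.
Variable R : realType.
Variables (m n : nat) (A : 'M[R]_(m, n)) (b : 'cV[R]_m).
Variables (Pr : {set {set 'I_m}}) (Pc : {set {set 'I_n}}) (alpha : R) (xs : 'cV[R]_n).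

Lemma exp0 x0 : expected_sq_err A b alpha Pr Pc x0 xs 0 = vnorm (x0 - xs) ^+ 2.
Proof.
rewrite /expected_sq_err (big_pred1 [tuple]) => [|t].
  by rewrite /= big_nil mul1r.
by have -> := tuple0 t; rewrite /= eqxx.
Qed.

Lemma expS k x0 : expected_sq_err A b alpha Pr Pc x0 xs k.+1 =
  \sum_(p : block m n | in_blocks Pr Pc p)
     block_prob A p * expected_sq_err A b alpha Pr Pc (dsbgs_step A b alpha x0 p) xs k.
Proof.
rewrite /expected_sq_err.
pose h := fun pw : block m n * k.-tuple (block m n) => [tuple of pw.1 :: pw.2].
rewrite (reindex h) /=; last first.
  exists (fun t => (thead t, [tuple of behead t])) => [[p w] _|t _].
    by congr (_, _); apply: val_inj.
  by rewrite /h /= -tuple_eta.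
under [RHS]eq_bigr do rewrite mulr_sumr.
rewrite [RHS]pair_big_dep /=; apply: eq_bigr => [[p w]] _ /=.
by rewrite big_cons mulrA.
Qed.

End Exp.


Unset Implicit Arguments. Set Strict Implicit.

Theorem theorem3 (R : realType) (m n : nat) (A : 'M[R]_(m, n)) (b : 'cV[R]_m)
  (Pr : {set {set 'I_m}}) (Pc : {set {set 'I_n}}) (alpha : R)
  (x0 : 'cV[R]_n) (Adag : 'M[R]_(n, m)) :
  \rank A = n ->
  0 < sigma_min A ->
  (exists x : 'cV[R]_n, A *m x = b) ->
  is_pinv A Adag ->
  finset.partition Pr [set: 'I_m] ->
  finset.partition Pc [set: 'I_n] ->
  0 < alpha ->
  alpha < 2 / (#|Pc|%:R * beta A Pr Pc) ->
  forall k : nat,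
    expected_sq_err A b alpha Pr Pc x0 (Adag *m b) k
    <= (1 - (2 * alpha - #|Pc|%:R * beta A Pr Pc * alpha ^+ 2)
              * sigma_min A ^+ 2 / frob A ^+ 2) ^+ k
       * vnorm (x0 - Adag *m b) ^+ 2.
Proof.
move=> hrank hsig [x1 hx1] [p1 p2 p3 p4] hPr hPc a0 aub k.
set xs := Adag *m b.
have Axs : A *m xs = b by rewrite /xs -hx1 !mulmxA p1.
have [n0|npos] := posnP n.
  subst n.
  have v0 : forall x : 'cV[R]_0, vnorm x = 0.
    by move=> x; rewrite /vnorm big_ord0 sqrtr0.
  rewrite v0 expr0n mulr0 /expected_sq_err big1 // => w _.
  by rewrite v0 expr0n mulr0.
have An0 : A != 0.
  apply/eqP => A0; move: hrank; rewrite A0 mxrank0 => n0.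
  by move: npos; rewrite -n0.
have F2p : 0 < frob A ^+ 2 by rewrite lt_def frob_eq0 An0 sqr_ge0.
have b0 := beta_ge0 A Pr Pc.
set bet := beta A Pr Pc in aub b0 *.
set t := #|Pc|%:R in aub *.
have t0 : 0 <= t by rewrite /t ler0n.
have tb0 : 0 < t * bet.
  rewrite lt_def mulr_ge0 // andbT; apply/eqP => tb.
  by move: aub; rewrite tb invr0 mulr0 => h; have := lt_trans a0 h; rewrite ltxx.
have C0 : 0 <= 2 * alpha - t * bet * alpha ^+ 2.
  rewrite ltr_pdivlMr // in aub.
  have -> : 2 * alpha - t * bet * alpha ^+ 2 = alpha * (2 - alpha * (t * bet)) by ring.
  by apply: mulr_ge0; [exact: ltW | rewrite subr_ge0 ltW].
set C := 2 * alpha - t * bet * alpha ^+ 2 in C0 *.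
set rho := 1 - C * sigma_min A ^+ 2 / frob A ^+ 2.
have prob0 : forall p, 0 <= block_prob A p.
  by move=> p; rewrite /block_prob divr_ge0 ?sqr_ge0.
have OS : forall x, \sum_(p : block m n | in_blocks Pr Pc p)
    block_prob A p * vnorm (dsbgs_step A b alpha x p - xs) ^+ 2
    <= rho * vnorm (x - xs) ^+ 2.
  move=> x; under eq_bigr do rewrite vnorm_sq.
  apply: le_trans (one_step alpha Axs hPr hPc F2p x) _.
  rewrite vnorm_sq /rho -/bet -/t -/C.
  have hs := sigma_min_bound (x - xs) hsig.
  have -> : (1 - C * sigma_min A ^+ 2 / frob A ^+ 2) * dot (x - xs) (x - xs) =
    dot (x - xs) (x - xs) - C / frob A ^+ 2 * (sigma_min A ^+ 2 * dot (x - xs) (x - xs)).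
    by field; apply: contraTneq F2p => ->; rewrite expr0n /= ltxx.
  rewrite lerD2l lerN2; apply: ler_wpM2l => //.
  by rewrite divr_ge0 // ltW.
have rho0 : 0 <= rho.
  pose x := xs + const_mx 1.
  have := OS x; rewrite vnorm_sq.
  have -> : x - xs = const_mx 1 by rewrite /x addrC addKr.
  have dp : 0 < dot (const_mx 1 : 'cV[R]_n) (const_mx 1).
    rewrite lt_def dot_eq0 dot_ge0 andbT; apply/eqP => /matrixP /(_ (Ordinal npos) 0).
    by rewrite !mxE => /eqP; rewrite oner_eq0.
  move=> h; rewrite -(pmulr_lge0 _ dp); apply: le_trans h.
  by apply: sumr_ge0 => p _; rewrite mulr_ge0 ?sqr_ge0.
elim: k x0 => [|k IH] x0.
  by rewrite exp0 expr0 mul1r.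
rewrite expS.
apply: (@le_trans _ _ (\sum_(p : block m n | in_blocks Pr Pc p)
   block_prob A p * (rho ^+ k * vnorm (dsbgs_step A b alpha x0 p - xs) ^+ 2))).
  by apply: ler_sum => p _; apply: ler_wpM2l => //; apply: IH.
under eq_bigr do rewrite mulrCA.
rewrite -mulr_sumr exprSr -mulrA; apply: ler_wpM2l; first exact: exprn_ge0.
exact: OS.
Qed.
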